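(* Let $x_s<x_t$ be integers, let $C\ge 0$, and let $f:[x_s,x_t]\to\mathbb{R}$ be such that $([x_s,x_t],f)$ is an Ameso($C$) pair. Suppose there exist $x^0\in[x_s,x_t]$ and a positive integer $b$ with $[x^0,x^0+b]\subseteq[x_s,x_t]$ such that $f(x^0)=\min_{y\in[x^0,x^0+b]}f(y)$ and $f(x^0)+C\le\max_{y\in[x^0,x^0+b]}f(y)$. Then $f(x^0)=\min_{y\in[x^0,x_t]}f(y)$.
   Context: For integers $a\le b$, $[a,b]$ denotes the set of integers $\{a,a+1,\dots,b\}$. Floors and ceilings of vectors are taken componentwise. A set $D^n\subseteq\mathbb{Z}^n$ is an Ameso set if $\lceil(\vec x+\vec y)/2\rceil,\lfloor(\vec x+\vec y)/2\rfloor\in D^n$ for all $\vec x,\vec y\in D^n$. For $C\ge 0$, $(D^n,f)$ is an Ameso($C$) pair if $D^n$ is an Ameso set, $f:D^n\to\mathbb{R}$ is bounded below, and $f(\vec x)+f(\vec y)+C\ge f(\lceil(\vec x+\vec y)/2\rceil)+f(\lfloor(\vec x+\vec y)/2\rfloor)$ for all $\vec x,\vec y\in D^n$. *)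

(* Defs.v *)
From Stdlib Require Import Reals ZArith Lra Lia.
Open Scope R_scope.

(* floor and ceiling of (x + y)/2 for integers x, y.
   Z.div rounds toward -infinity, so Z.div s 2 = floor (s/2). *)
Definition zfloor_half (x y : Z) : Z := Z.div (x + y) 2.
Definition zceil_half (x y : Z) : Z := Z.opp (Z.div (Z.opp (x + y)) 2).

Definition zinterval (a b : Z) (x : Z) : Prop := (a <= x <= b)%Z.

Definition ameso_set (D : Z -> Prop) : Prop :=
  forall x y, D x -> D y -> D (zceil_half x y) /\ D (zfloor_half x y).

(* (D, f) is an Ameso(C) pair; f is only relevant on D *)
Definition ameso_pair (C : R) (D : Z -> Prop) (f : Z -> R) : Prop :=
  ameso_set D /\
  (exists m : R, forall x, D x -> m <= f x) /\
  (forall x y, D x -> D y ->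
     f x + f y + C >= f (zceil_half x y) + f (zfloor_half x y)).

(* Main.v *)
Require Import Defs.
From Stdlib Require Import Reals ZArith Lra Lia Arith Wf_nat.
Open Scope R_scope.

Lemma half_eq (a c Y : Z) : (a + c = 2 * Y)%Z ->
  zceil_half a c = Y /\ zfloor_half a c = Y.
Proof.
  intros H. unfold zceil_half, zfloor_half. rewrite H.
  split.
  - replace (- (2 * Y))%Z with ((- Y) * 2)%Z by lia. rewrite Z.div_mul by lia. lia.
  - replace (2 * Y)%Z with (Y * 2)%Z by lia. rewrite Z.div_mul by lia. lia.
Qed.

Lemma max_exists (f : Z -> R) (n : nat) (a : Z) :
  exists Y, (a <= Y <= a + Z.of_nat n)%Z /\
    forall w, (a <= w <= a + Z.of_nat n)%Z -> f w <= f Y.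
Proof.
  induction n as [|n IH].
  - exists a. split; [lia|]. intros w Hw. replace w with a by lia. lra.
  - destruct IH as [Y [HY HM]].
    destruct (Rle_dec (f Y) (f (a + Z.of_nat (S n))%Z)) as [Hle|Hlt].
    + exists (a + Z.of_nat (S n))%Z. split; [lia|].
      intros w Hw.
      destruct (Z.eq_dec w (a + Z.of_nat (S n))%Z) as [->|Hne]; [lra|].
      assert (f w <= f Y) by (apply HM; lia). lra.
    + exists Y. split; [lia|]. intros w Hw.
      destruct (Z.eq_dec w (a + Z.of_nat (S n))%Z) as [->|Hne]; [lra|].
      apply HM; lia.
Qed.

Theorem lemma3 (xs xt : Z) (C : R) (f : Z -> R) :
  (xs < xt)%Z -> 0 <= C ->
  ameso_pair C (zinterval xs xt) f ->
  forall (x0 b : Z),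
    (0 < b)%Z ->
    (forall y, zinterval x0 (x0 + b) y -> zinterval xs xt y) ->
    (* f(x0) = min_{y in [x0, x0+b]} f(y) *)
    (forall y, zinterval x0 (x0 + b) y -> f x0 <= f y) ->
    (* f(x0) + C <= max_{y in [x0, x0+b]} f(y) *)
    (exists y, zinterval x0 (x0 + b) y /\ f x0 + C <= f y) ->
    (* f(x0) = min_{y in [x0, xt]} f(y) *)
    forall y, zinterval x0 xt y -> f x0 <= f y.
Proof.
  intros Hxs HC [_ [_ Hp]] x0 b Hb Hsub Hmin [yw [Hyw Hfyw]] z Hz.
  unfold zinterval in *.
  assert (Hx0 : (xs <= x0)%Z) by (destruct (Hsub x0); lia).
  destruct (Rle_dec (f x0) (f z)) as [Hok|Hbad]; [exact Hok|].
  exfalso. apply Rnot_le_lt in Hbad.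
  destruct (Z_le_gt_dec z (x0 + b)) as [Hzb|Hzb].
  { assert (f x0 <= f z) by (apply Hmin; lia). lra. }
  assert (Pair : forall a c Y, (x0 <= a <= z)%Z -> (x0 <= c <= z)%Z ->
            (a + c = 2 * Y)%Z -> f a + f c + C >= 2 * f Y).
  { intros a c Y Ha Hc Hs. destruct (half_eq a c Y Hs) as [E1 E2].
    pose proof (Hp a c ltac:(unfold zinterval; lia) ltac:(unfold zinterval; lia)) as H.
    rewrite E1, E2 in H. lra. }
  assert (Main : forall n : nat, forall Y, Z.of_nat n = (z - Y)%Z ->
            (x0 < Y <= z)%Z -> (forall w, (x0 <= w <= z)%Z -> f w <= f Y) ->
            f x0 + C <= f Y -> False).
  { intros n. induction n as [n IH] using lt_wf_ind.
    intros Y Hn HY HM HYC.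
    destruct (Z_le_gt_dec (2 * Y - x0) z) as [H2|H2].
    - pose proof (Pair x0 (2 * Y - x0)%Z Y ltac:(lia) ltac:(lia) ltac:(lia)) as P.
      assert (HY2 : f Y <= f (2 * Y - x0)%Z) by lra.
      apply (IH (Z.to_nat (z - (2 * Y - x0))) ltac:(lia) (2 * Y - x0)%Z);
        [lia|lia| |].
      + intros w Hw. pose proof (HM w Hw). lra.
      + lra.
    - pose proof (Pair (2 * Y - z)%Z z Y ltac:(lia) ltac:(lia) ltac:(lia)) as P.
      pose proof (HM (2 * Y - z)%Z ltac:(lia)). lra. }
  destruct (max_exists f (Z.to_nat (z - x0)) x0) as [Y [HY HM]].
  rewrite Z2Nat.id in HY, HM by lia.
  replace (x0 + (z - x0))%Z with z in HY, HM by lia.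
  assert (HYC : f x0 + C <= f Y) by (pose proof (HM yw ltac:(lia)); lra).
  destruct (Z.eq_dec Y x0) as [->|Hne].
  - assert (H1 : f x0 <= f (x0 + 1)%Z) by (apply Hmin; lia).
    apply (Main (Z.to_nat (z - (x0 + 1))) (x0 + 1)%Z); [lia|lia| |].
    + intros w Hw. pose proof (HM w Hw). lra.
    + lra.
  - apply (Main (Z.to_nat (z - Y)) Y); [lia|lia|exact HM|exact HYC].
Qed.
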